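(* Let $g\colon\mathbb{S}^1\to\mathbb{S}^1$ be an orientation-preserving homeomorphism. For $i=1,2$, the map $\widetilde\iota_i=Q\circ\iota_i\colon\overline Z_i\to\widetilde Z$ is $1$-Lipschitz (with respect to $\sigma$ and $d_{\widetilde Z}$) and is a local isometry on $Z_i$. Moreover, for every $z\in\widetilde Z$ the preimage $\widetilde\iota_i^{-1}(z)$ is compact and connected, and it contains two or more points only if $\widetilde\iota_i^{-1}(z)\subset\mathbb{S}^1$.
   Context: Let $\mathbb{S}^2\subset\mathbb{R}^3$ be the unit sphere with great-circle distance $\sigma$, $\mathbb{S}^1$ the equator, $Z_1,Z_2$ the open southern and northern hemispheres. For an orientation-preserving homeomorphism $g\colon\mathbb{S}^1\to\mathbb{S}^1$, $Z$ is obtained from $\overline Z_1\sqcup\overline Z_2$ by identifying $z\in\mathbb{S}^1\subset\overline Z_1$ with $g(z)\in\mathbb{S}^1\subset\overline Z_2$, with maps $\iota_i\colon\overline Z_i\to Z$. Define $D(x,y)=\infty$ if one point is in $\iota_1(Z_1)$ and the other in $\iota_2(Z_2)$; $D(\iota_1(a),\iota_1(b))=\min\{\sigma(a,b),\sigma(g(a),g(b))\}$ for $a,b\in\mathbb{S}^1$; otherwise $D(x,y)=\sigma(\iota_i^{-1}(x),\iota_i^{-1}(y))$ for the common $i$. $d_Z=\inf\sum_k D(x_k,x_{k+1})$ over finite chains; $\widetilde Z$ is the metric space obtained by identifying points at $d_Z$-distance 0, $Q\colon Z\to\widetilde Z$ the quotient map, $d_{\widetilde Z}$ the induced distance. *)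

(* Defs.v *)
From Stdlib Require Import Reals List.
From Coquelicot Require Import Coquelicot.
Open Scope R_scope.

Record pt := mkpt { px : R; py : R; pz : R }.

Definition dot (a b : pt) : R := px a * px b + py a * py b + pz a * pz b.

Definition onS2 (p : pt) : Prop := dot p p = 1.
Definition onS1 (p : pt) : Prop := onS2 p /\ pz p = 0.

Definition gdist (a b : pt) : R := acos (dot a b).

(** The two hemispheres: [south] is Z_1, [north] is Z_2. *)
Inductive hemi := south | north.

Definition openH (i : hemi) (p : pt) : Prop :=
  onS2 p /\ match i with south => pz p < 0 | north => 0 < pz p end.
Definition closedH (i : hemi) (p : pt) : Prop :=
  onS2 p /\ match i with south => pz p <= 0 | north => 0 <= pz p end.

Definition eqpt (t : R) : pt := mkpt (cos t) (sin t) 0.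

(** g : S^1 -> S^1 is a homeomorphism (w.r.t. gdist) with inverse ginv
    (only the values of g, ginv on S^1 matter). *)
Definition cont_on_S1 (f : pt -> pt) : Prop :=
  forall p, onS1 p -> forall eps, 0 < eps -> exists delta, 0 < delta /\
    forall q, onS1 q -> gdist p q < delta -> gdist (f p) (f q) < eps.

Definition circle_homeo (g ginv : pt -> pt) : Prop :=
  (forall p, onS1 p -> onS1 (g p) /\ onS1 (ginv p) /\
                       ginv (g p) = p /\ g (ginv p) = p) /\
  cont_on_S1 g /\ cont_on_S1 ginv.

Definition orientation_preserving (g : pt -> pt) : Prop :=
  exists G : R -> R,
    (forall s t, s < t -> G s < G t) /\
    (forall t, G (t + 2 * PI) = G t + 2 * PI) /\
    (forall t, g (eqpt t) = eqpt (G t)).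

(** As a set, Z = iota_1(closed Z_1) disjoint-union
    iota_2(Z_2); a point of the equator z is represented by [zS z]
    (= iota_1 z = iota_2 (g z)).  [zS a] must have a in closed Z_1,
    [zN b] must have b in open Z_2. *)
Inductive Zpt := zS (a : pt) | zN (b : pt).

Definition inZ (x : Zpt) : Prop :=
  match x with zS a => closedH south a | zN b => openH north b end.

Definition iotaZ (ginv : pt -> pt) (i : hemi) (p : pt) : Zpt :=
  match i with
  | south => zS p
  | north => if Req_EM_T (pz p) 0 then zS (ginv p) else zN p
  end.

Definition Dfun (g : pt -> pt) (x y : Zpt) : Rbar :=
  match x, y with
  | zS a, zS b =>
      if Req_EM_T (pz a) 0 then
        if Req_EM_T (pz b) 0 then Finite (Rmin (gdist a b) (gdist (g a) (g b)))
        else Finite (gdist a b)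
      else Finite (gdist a b)
  | zS a, zN b =>
      if Req_EM_T (pz a) 0 then Finite (gdist (g a) b) else p_infty
  | zN a, zS b =>
      if Req_EM_T (pz b) 0 then Finite (gdist a (g b)) else p_infty
  | zN a, zN b => Finite (gdist a b)
  end.

(** Cost of the chain x = x_0, x_1, ..., x_n = y (l = [x_1; ...; x_{n-1}]). *)
Fixpoint chain_cost (g : pt -> pt) (x : Zpt) (l : list Zpt) (y : Zpt) : Rbar :=
  match l with
  | nil => Dfun g x y
  | z :: l' => Rbar_plus (Dfun g x z) (chain_cost g z l' y)
  end.

Definition dZ (g : pt -> pt) (x y : Zpt) : Rbar :=
  Glb_Rbar (fun r : R => exists l : list Zpt,
                 List.Forall inZ l /\ chain_cost g x l y = Finite r).

(** Z~ is the quotient of Z by {d_Z = 0}; with Q the quotient map,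
    d_{Z~}(Q x, Q y) = d_Z(x, y), and the preimage under
    iota~_i = Q o iota_i of the class Q x is the set below. *)
Definition tilde_preimage (g ginv : pt -> pt) (i : hemi) (x : Zpt) : pt -> Prop :=
  fun a => closedH i a /\ dZ g (iotaZ ginv i a) x = Finite 0.

Definition sopen (U : pt -> Prop) : Prop :=
  forall p, onS2 p -> U p -> exists eps, 0 < eps /\
    forall q, onS2 q -> gdist p q < eps -> U q.

Definition scompact (K : pt -> Prop) : Prop :=
  (forall p, K p -> onS2 p) /\
  forall (I : Type) (U : I -> pt -> Prop),
    (forall j, sopen (U j)) ->
    (forall p, K p -> exists j, U j p) ->
    exists l : list I, forall p, K p -> exists j, List.In j l /\ U j p.

Definition sconnected (K : pt -> Prop) : Prop :=
  ~ exists U V : pt -> Prop,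
      sopen U /\ sopen V /\
      (forall p, K p -> U p \/ V p) /\
      (forall p, K p -> U p -> V p -> False) /\
      (exists p, K p /\ U p) /\ (exists p, K p /\ V p).

(* Main.v *)
Require Import Defs.
From Stdlib Require Import Reals Lra Lia Psatz List Classical ZArith Rtopology IndefiniteDescription.
From Coquelicot Require Import Coquelicot.
Open Scope R_scope.

Lemma dot_comm a b : dot a b = dot b a.
Proof. unfold dot; ring. Qed.
Lemma gdist_sym a b : gdist a b = gdist b a.
Proof. unfold gdist; now rewrite dot_comm. Qed.

Lemma dot_bound a b : onS2 a -> onS2 b -> -1 <= dot a b <= 1.
Proof.
  unfold onS2, dot; destruct a as [a1 a2 a3], b as [b1 b2 b3]; simpl; intros Ha Hb.
  assert (E: (a1*b1+a2*b2+a3*b3)^2 + ((a2*b3-a3*b2)^2+(a3*b1-a1*b3)^2+(a1*b2-a2*b1)^2)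
     = (a1*a1+a2*a2+a3*a3)*(b1*b1+b2*b2+b3*b3)) by ring.
  rewrite Ha, Hb in E.
  assert (Hs: 0 <= (a2*b3-a3*b2)^2+(a3*b1-a1*b3)^2+(a1*b2-a2*b1)^2) by (repeat apply Rplus_le_le_0_compat; apply pow2_ge_0).
  split; nra.
Qed.

Lemma acos_antitone x y : -1 <= x -> x <= y -> y <= 1 -> acos y <= acos x.
Proof.
  intros. destruct (Rle_or_lt (acos y) (acos x)) as [h|h]; auto.
  pose proof (acos_bound x); pose proof (acos_bound y).
  pose proof (cos_decreasing_1 (acos x) (acos y) ltac:(lra) ltac:(lra) ltac:(lra) ltac:(lra) h).
  rewrite !cos_acos in H4 by lra. lra.
Qed.

Lemma acos_antitone_strict x y : -1 <= x -> x < y -> y <= 1 -> acos y < acos x.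
Proof.
  intros. pose proof (acos_antitone x y ltac:(lra) ltac:(lra) ltac:(lra)).
  destruct H2; auto. assert (cos (acos y) = cos (acos x)) by now rewrite H2.
  rewrite !cos_acos in H3 by lra. lra.
Qed.

Lemma gdist_nonneg a b : 0 <= gdist a b.
Proof. unfold gdist; apply acos_bound. Qed.
Lemma gdist_lePI a b : gdist a b <= PI.
Proof. unfold gdist; apply acos_bound. Qed.

Lemma gdist_self a : onS2 a -> gdist a a = 0.
Proof. unfold gdist, onS2; intros ->; apply acos_1. Qed.

Lemma gdist_eq0 a b : onS2 a -> onS2 b -> gdist a b = 0 -> a = b.
Proof.
  intros Ha Hb H. pose proof (dot_bound a b Ha Hb).
  assert (dot a b = 1). { unfold gdist in H. rewrite <- (cos_acos (dot a b)) by lra. rewrite H; apply cos_0. }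
  unfold onS2, dot in *; destruct a as [a1 a2 a3], b as [b1 b2 b3]; simpl in *.
  assert (E: (a1-b1)^2+(a2-b2)^2+(a3-b3)^2 = 0) by nra.
  assert ((a1-b1)^2 = 0 /\ (a2-b2)^2 = 0 /\ (a3-b3)^2=0) as (h1&h2&h3).
  { pose proof (pow2_ge_0 (a1-b1)); pose proof (pow2_ge_0 (a2-b2)); pose proof (pow2_ge_0 (a3-b3)). lra. }
  assert (a1-b1=0) by nra; assert (a2-b2=0) by nra; assert (a3-b3=0) by nra.
  f_equal; lra.
Qed.

Lemma gdist_tri a b c : onS2 a -> onS2 b -> onS2 c -> gdist a c <= gdist a b + gdist b c.
Proof.
  intros Ha Hb Hc.
  pose proof (dot_bound a b Ha Hb) as Bx. pose proof (dot_bound b c Hb Hc) as By.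
  pose proof (dot_bound a c Ha Hc) as Bz.
  set (x := dot a b) in *; set (y := dot b c) in *; set (z := dot a c) in *.
  assert (Gram: (1 - x^2)*(1-y^2) - (z - x*y)^2 >= 0).
  { unfold onS2, x, y, z, dot in *; destruct a as [a1 a2 a3], b as [b1 b2 b3], c as [c1 c2 c3]; simpl in *.
    set (det := a1*(b2*c3-b3*c2) - a2*(b1*c3-b3*c1) + a3*(b1*c2-b2*c1)).
    assert (E: (a1*a1+a2*a2+a3*a3)*(b1*b1+b2*b2+b3*b3)*(c1*c1+c2*c2+c3*c3)
      + 2*(a1*b1+a2*b2+a3*b3)*(b1*c1+b2*c2+b3*c3)*(a1*c1+a2*c2+a3*c3)
      - (a1*b1+a2*b2+a3*b3)^2*(c1*c1+c2*c2+c3*c3)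
      - (b1*c1+b2*c2+b3*c3)^2*(a1*a1+a2*a2+a3*a3)
      - (a1*c1+a2*c2+a3*c3)^2*(b1*b1+b2*b2+b3*b3) = det^2) by (unfold det; ring).
    rewrite Ha, Hb, Hc in E. pose proof (pow2_ge_0 det). nra. }
  unfold gdist; fold x y z.
  pose proof (acos_bound x); pose proof (acos_bound y); pose proof (acos_bound z).
  destruct (Rle_or_lt PI (acos x + acos y)). lra.
  assert (Hc2: cos (acos x + acos y) = x*y - sqrt (1-x²) * sqrt (1-y²)).
  { rewrite cos_plus, !cos_acos, !sin_acos by lra. ring. }
  assert (z >= cos (acos x + acos y)).
  { rewrite Hc2. rewrite <- sqrt_mult.
    2,3: unfold Rsqr; nra.

    assert (HS: 0 <= (1-x²)*(1-y²)) by (apply Rmult_le_pos; unfold Rsqr; nra).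
    pose proof (sqrt_pos ((1-x²)*(1-y²))). pose proof (sqrt_sqrt _ HS).
    unfold Rsqr in *. nra. }
  rewrite <- (acos_cos (acos x + acos y)) by lra.
  apply acos_antitone; [apply COS_bound | lra | lra].
Qed.

Lemma acos_cos_abs x : Rabs x <= PI -> acos (cos x) = Rabs x.
Proof.
  intros H. destruct (Rle_or_lt 0 x).
  - rewrite Rabs_right by lra. apply acos_cos. rewrite Rabs_right in H; lra.
  - rewrite Rabs_left by lra. rewrite <- cos_neg. apply acos_cos. rewrite Rabs_left in H; lra.
Qed.

Lemma acos_cos_le x : acos (cos x) <= Rabs x.
Proof.
  destruct (Rle_or_lt (Rabs x) PI). rewrite acos_cos_abs; lra.
  pose proof (acos_bound (cos x)); lra.
Qed.

Lemma gdist_eqpt u v : gdist (eqpt u) (eqpt v) = acos (cos (u - v)).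
Proof. unfold gdist, eqpt, dot; simpl. rewrite cos_minus. f_equal; ring. Qed.

Lemma gdist_eqpt_le u v : gdist (eqpt u) (eqpt v) <= Rabs (u - v).
Proof. rewrite gdist_eqpt; apply acos_cos_le. Qed.

Lemma eqpt_onS1 t : onS1 (eqpt t).
Proof. unfold onS1, onS2, eqpt, dot; simpl. split; [|auto]. pose proof (sin2_cos2 t). unfold Rsqr in *. lra. Qed.

Lemma eqpt_onS2 t : onS2 (eqpt t).
Proof. apply eqpt_onS1. Qed.

Lemma reduce y : exists k : Z, -PI <= y - 2*PI*IZR k <= PI.
Proof.
  pose proof PI_RGT_0.
  set (z := (y + PI) / (2*PI)). destruct (archimed z) as [h1 h2].
  exists (up z - 1)%Z. rewrite minus_IZR.
  assert (Hz: y = z * (2*PI) - PI) by (unfold z; field; lra).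
  split; rewrite Hz; nra.
Qed.

Lemma cos_perZ x k : cos (x + 2*PI*IZR k) = cos x /\ sin (x + 2*PI*IZR k) = sin x.
Proof.
  destruct k as [|p|p]; simpl.
  - rewrite Rmult_0_r, Rplus_0_r. auto.
  - assert (E: IZR (Zpos p) = INR (Pos.to_nat p)) by (rewrite INR_IZR_INZ, positive_nat_Z; auto).
    rewrite E.
    replace (2*PI*INR (Pos.to_nat p)) with (2*INR (Pos.to_nat p)*PI) by ring.
    split; [apply cos_period|apply sin_period].
  - assert (E: IZR (Zpos p) = INR (Pos.to_nat p)) by (rewrite INR_IZR_INZ, positive_nat_Z; auto).
    rewrite IZR_NEG, E.
    set (n := Pos.to_nat p).
    pose proof (cos_period (x - 2*INR n * PI) n). pose proof (sin_period (x - 2*INR n * PI) n).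
    replace (x - 2*INR n*PI + 2*INR n*PI) with x in * by ring.
    replace (x + 2*PI* - INR n) with (x - 2*INR n*PI) by ring. split; auto.
Qed.

Lemma eqpt_perZ x k : eqpt (x + 2*PI*IZR k) = eqpt x.
Proof. unfold eqpt. destruct (cos_perZ x k) as [-> ->]. auto. Qed.

Lemma eqpt_mod w t : eqpt w = eqpt t -> exists k : Z, w = t + 2*PI*IZR k.
Proof.
  intros H. assert (Hc: cos w = cos t) by (change (px (eqpt w) = px (eqpt t)); now rewrite H).
  assert (Hs: sin w = sin t) by (change (py (eqpt w) = py (eqpt t)); now rewrite H).
  destruct (reduce (w - t)) as [k Hk]. exists k.
  set (y := w - t - 2*PI*IZR k) in *.
  assert (cos y = 1).
  { replace y with ((w - t) + 2*PI*IZR (-k)) by (unfold y; rewrite opp_IZR; ring).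
    rewrite (proj1 (cos_perZ _ _)). rewrite cos_minus, Hc, Hs. pose proof (sin2_cos2 t). unfold Rsqr in *; lra. }
  assert (Rabs y = 0). { rewrite <- acos_cos_abs. rewrite H0; apply acos_1. apply Rabs_le; lra. }
  apply Rabs_eq_0 in H1. unfold y in H1. lra.
Qed.

Lemma angle_exists p : onS1 p -> exists t, -PI <= t <= PI /\ eqpt t = p.
Proof.
  intros [Hp Hz]. unfold onS2, dot in Hp. destruct p as [x y z]; simpl in *. subst z.
  assert (Hx: -1 <= x <= 1) by nra.
  pose proof (acos_bound x).
  assert (Hsq: sqrt (1 - x²) = Rabs y).
  { rewrite <- sqrt_Rsqr_abs. f_equal. unfold Rsqr; lra. }
  destruct (Rle_or_lt 0 y).
  - exists (acos x). split. pose proof PI_RGT_0; lra.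
    unfold eqpt. rewrite cos_acos, sin_acos, Hsq, Rabs_right by lra. auto.
  - exists (- acos x). split. lra.
    unfold eqpt. rewrite cos_neg, sin_neg, cos_acos, sin_acos, Hsq, Rabs_left by lra. f_equal; ring.
Qed.

Lemma lift_exact u v : exists k : Z, eqpt (v + 2*PI*IZR k) = eqpt v /\
   Rabs (u - (v + 2*PI*IZR k)) = acos (cos (u - v)).
Proof.
  destruct (reduce (u - v)) as [k Hk]. exists k. split. apply eqpt_perZ.
  rewrite <- acos_cos_abs by (apply Rabs_le; lra).
  replace (u - (v + 2*PI*IZR k)) with ((u - v) + 2*PI*IZR (-k)) by (rewrite opp_IZR; ring).
  now rewrite (proj1 (cos_perZ _ _)).
Qed.

Lemma Dfun_notm g x y : Dfun g x y <> m_infty.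
Proof. unfold Dfun; destruct x, y; repeat destruct Req_EM_T; discriminate. Qed.

Lemma Dfun_sym g x y : Dfun g x y = Dfun g y x.
Proof.
  unfold Dfun; destruct x as [a|a], y as [b|b]; repeat destruct Req_EM_T; try reflexivity; try congruence;
  try rewrite (gdist_sym a b); try rewrite (gdist_sym (g a) (g b)); try rewrite (gdist_sym (g a) b);
  try rewrite (gdist_sym a (g b)); reflexivity.
Qed.

Lemma Dfun_nonneg g x y d : Dfun g x y = Finite d -> 0 <= d.
Proof.
  unfold Dfun; destruct x, y; repeat destruct Req_EM_T; intro H; inversion H; subst;
  try apply gdist_nonneg; try (apply Rmin_glb; apply gdist_nonneg).
Qed.

Lemma plus_fin a b r : a <> m_infty -> b <> m_infty -> Rbar_plus a b = Finite r ->
  exists x y, a = Finite x /\ b = Finite y /\ r = x + y.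
Proof.
  destruct a, b; simpl; intros; try congruence.
  inversion H1; eauto.
Qed.

Lemma chain_notm g x l y : chain_cost g x l y <> m_infty.
Proof.
  revert x; induction l; intros x; simpl. apply Dfun_notm.
  pose proof (Dfun_notm g x a). pose proof (IHl a).
  destruct (Dfun g x a), (chain_cost g a l y); simpl; congruence.
Qed.

Lemma chain_cons g x z l y r : chain_cost g x (z :: l) y = Finite r ->
  exists d r', Dfun g x z = Finite d /\ chain_cost g z l y = Finite r' /\ r = d + r'.
Proof. simpl; intro H. apply plus_fin in H; auto using Dfun_notm, chain_notm. Qed.

Definition reach g x y r := exists l, List.Forall inZ l /\ chain_cost g x l y = Finite r.

Lemma reach_nonneg g x y r : reach g x y r -> 0 <= r.
Proof.
  intros [l [_ H]]. revert x r H; induction l; intros x r H; simpl in H.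
  eapply Dfun_nonneg; eauto.
  apply (chain_cons g x a l y r) in H. destruct H as (d&r'&H1&H2&->).
  pose proof (Dfun_nonneg _ _ _ _ H1). pose proof (IHl _ _ H2). lra.
Qed.

Lemma reach_nil g x y d : Dfun g x y = Finite d -> reach g x y d.
Proof. intros; exists nil; split; auto. Qed.

Lemma reach_cons g x z y d r : Dfun g x z = Finite d -> inZ z -> reach g z y r -> reach g x y (d + r).
Proof.
  intros H1 H2 [l [Hl H3]]. exists (z :: l); split. constructor; auto.
  simpl. rewrite H1, H3. reflexivity.
Qed.

Lemma reach_app g x z y r1 r2 : reach g x z r1 -> inZ z -> reach g z y r2 -> reach g x y (r1 + r2).
Proof.
  intros [l [Hl H]] Hz H2. revert x r1 H; induction l; intros x r1 H; simpl in H.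
  - now apply reach_cons with z.
  - apply chain_cons in H. destruct H as (d&r'&H1&H3&->). inversion Hl; subst.
    replace (d + r' + r2) with (d + (r' + r2)) by ring.
    apply reach_cons with a; auto.
Qed.

Lemma reach_sym g x y r : reach g x y r -> reach g y x r.
Proof.
  intros [l [Hl H]]. revert x r H; induction l; intros x r H; simpl in H.
  - apply reach_nil. now rewrite Dfun_sym.
  - apply chain_cons in H. destruct H as (d&r'&H1&H3&->). inversion Hl; subst.
    rewrite Rplus_comm. apply reach_app with a; auto.
    apply reach_nil. now rewrite Dfun_sym.
Qed.

Lemma dZ_le g x y r : reach g x y r -> Rbar_le (dZ g x y) (Finite r).
Proof.
  intros H. unfold dZ. destruct (Glb_Rbar_correct (fun r : R => exists l : list Zpt,
                 List.Forall inZ l /\ chain_cost g x l y = Finite r)) as [H1 _].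
  apply H1. exact H.
Qed.

Lemma dZ_ge g x y m : (forall r, reach g x y r -> m <= r) -> Rbar_le (Finite m) (dZ g x y).
Proof.
  intros H. unfold dZ. destruct (Glb_Rbar_correct (fun r : R => exists l : list Zpt,
                 List.Forall inZ l /\ chain_cost g x l y = Finite r)) as [_ H2].
  apply H2. intros r Hr. apply H. exact Hr.
Qed.

Lemma dZ_zero_iff g x y : dZ g x y = Finite 0 <-> (forall eta, 0 < eta -> exists r, reach g x y r /\ r < eta).
Proof.
  split.
  - intros H eta Heta. apply NNPP; intro Hn.
    assert (Rbar_le (Finite eta) (dZ g x y)).
    { apply dZ_ge. intros r Hr. destruct (Rle_or_lt eta r); auto. exfalso; apply Hn; eauto. }
    rewrite H in H0; simpl in H0; lra.
  - intros H. apply Rbar_le_antisym.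
    + destruct (dZ g x y) eqn:E; simpl; auto.
      * apply Rnot_lt_le; intro h. destruct (H r h) as [r' [Hr Hr']].
        pose proof (dZ_le _ _ _ _ Hr). rewrite E in H0; simpl in H0; lra.
      * destruct (H 1 ltac:(lra)) as [r' [Hr _]]. pose proof (dZ_le _ _ _ _ Hr). rewrite E in H0; simpl in H0; auto.
    + apply dZ_ge. apply reach_nonneg.
Qed.

Lemma DSS_ee g a b : pz a = 0 -> pz b = 0 -> Dfun g (zS a) (zS b) = Finite (Rmin (gdist a b) (gdist (g a) (g b))).
Proof. intros; unfold Dfun; repeat destruct Req_EM_T; congruence. Qed.
Lemma DSS_n g a b : pz a <> 0 -> Dfun g (zS a) (zS b) = Finite (gdist a b).
Proof. intros; unfold Dfun; repeat destruct Req_EM_T; congruence. Qed.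
Lemma DSS_en g a b : pz b <> 0 -> Dfun g (zS a) (zS b) = Finite (gdist a b).
Proof. intros; unfold Dfun; repeat destruct Req_EM_T; congruence. Qed.
Lemma DSN_e g a b : pz a = 0 -> Dfun g (zS a) (zN b) = Finite (gdist (g a) b).
Proof. intros; unfold Dfun; repeat destruct Req_EM_T; congruence. Qed.
Lemma DSN_n g a b : pz a <> 0 -> Dfun g (zS a) (zN b) = p_infty.
Proof. intros; unfold Dfun; repeat destruct Req_EM_T; congruence. Qed.
Lemma DNS_e g a b : pz b = 0 -> Dfun g (zN a) (zS b) = Finite (gdist a (g b)).
Proof. intros; unfold Dfun; repeat destruct Req_EM_T; congruence. Qed.
Lemma DNS_n g a b : pz b <> 0 -> Dfun g (zN a) (zS b) = p_infty.
Proof. intros; unfold Dfun; repeat destruct Req_EM_T; congruence. Qed.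
Lemma DNN g a b : Dfun g (zN a) (zN b) = Finite (gdist a b).
Proof. reflexivity. Qed.

Lemma homeo_facts g ginv p : circle_homeo g ginv -> onS1 p ->
  onS1 (g p) /\ onS1 (ginv p) /\ ginv (g p) = p /\ g (ginv p) = p.
Proof. intros [H _] Hp; auto. Qed.

Definition iz (i : hemi) c := match i with south => zS c | north => zN c end.

Lemma iota_open ginv i a : openH i a -> iotaZ ginv i a = iz i a.
Proof.
  destruct i; simpl; auto. intros [_ h]. destruct Req_EM_T; auto. lra.
Qed.

Lemma iota_inZ g ginv i a : circle_homeo g ginv -> closedH i a -> inZ (iotaZ ginv i a).
Proof.
  intros Hh [Ha Hz]. destruct i; simpl; auto. split; auto.
  destruct Req_EM_T.
  - destruct (homeo_facts g ginv a Hh (conj Ha e)) as (_&[h1 h2]&_). simpl. split; auto; lra.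
  - split; auto; lra.
Qed.

Lemma Dfun_iota_le g ginv i a b : circle_homeo g ginv -> closedH i a -> closedH i b ->
  exists d, Dfun g (iotaZ ginv i a) (iotaZ ginv i b) = Finite d /\ d <= gdist a b.
Proof.
  intros Hh [Ha Hza] [Hb Hzb]. destruct i; unfold iotaZ.
  - destruct (Req_EM_T (pz a) 0); destruct (Req_EM_T (pz b) 0).
    + rewrite DSS_ee by auto. eexists; split; eauto. apply Rmin_l.
    + rewrite DSS_en by auto. eauto with real.
    + rewrite DSS_n by auto. eauto with real.
    + rewrite DSS_n by auto. eauto with real.
  - destruct (Req_EM_T (pz a) 0); destruct (Req_EM_T (pz b) 0).
    + destruct (homeo_facts g ginv a Hh (conj Ha e)) as (_&[h1 h2]&_&h3).
      destruct (homeo_facts g ginv b Hh (conj Hb e0)) as (_&[h4 h5]&_&h6).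
      rewrite DSS_ee by auto. rewrite h3, h6. eexists; split; eauto. apply Rmin_r.
    + destruct (homeo_facts g ginv a Hh (conj Ha e)) as (_&[h1 h2]&_&h3).
      rewrite DSN_e by auto. rewrite h3. eauto with real.
    + destruct (homeo_facts g ginv b Hh (conj Hb e)) as (_&[h4 h5]&_&h6).
      rewrite DNS_e by auto. rewrite h6. eauto with real.
    + rewrite DNN. eauto with real.
Qed.

Lemma chain_reach g x l y r : List.Forall inZ l -> chain_cost g x l y = Finite r -> reach g x y r.
Proof. intros; exists l; auto. Qed.

Lemma exit_lemma g ginv i : circle_homeo g ginv -> forall l b y r, openH i b -> List.Forall inZ l -> inZ y ->
  chain_cost g (iz i b) l y = Finite r ->
  (exists e, onS1 e /\ gdist b e <= r) \/ (exists c, openH i c /\ y = iz i c /\ gdist b c <= r).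
Proof.
  intros Hh l. induction l as [|z l IH]; intros b y r Hb Hl Hy Hc.
  - cbn [chain_cost] in Hc. destruct i, y as [c|c]; cbn [iz inZ openH closedH] in *; destruct Hb as [Hb Hbz].
    + destruct Hy as [Hc1 Hc2]. rewrite DSS_n in Hc by lra. inversion Hc; subst.
      destruct (Req_dec (pz c) 0).
      * left; exists c; split; [split; auto|lra].
      * right; exists c; repeat split; auto; lra.
    + rewrite DSN_n in Hc by lra. discriminate.
    + destruct Hy as [Hc1 Hc2]. destruct (Req_dec (pz c) 0).
      * rewrite DNS_e in Hc by auto. inversion Hc; subst.
        left; exists (g c). split. apply (homeo_facts g ginv c Hh). split; auto. lra.
      * rewrite DNS_n in Hc by auto. discriminate.
    + inversion Hc; subst. right; exists c; repeat split; auto; try lra. apply Hy. apply Hy.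
  - apply chain_cons in Hc. destruct Hc as (d&r'&H1&H2&->). inversion Hl; subst.
    pose proof (reach_nonneg g z y r' (chain_reach _ _ _ _ _ H4 H2)) as Hr'.
    destruct i; cbn [iz inZ openH closedH] in *; destruct Hb as [Hb Hbz]; destruct z as [c|c]; cbn [inZ openH closedH] in H3.
    + destruct H3 as [Hc1 Hc2]. rewrite DSS_n in H1 by lra. inversion H1; subst.
      destruct (Req_dec (pz c) 0).
      * left; exists c; split; [split; auto|lra].
      * destruct (IH c y r' ltac:(split; auto; lra) H4 Hy H2) as [(e&He&He2)|(c'&Hc'&->&Hc'2)].
        -- left; exists e; split; auto. pose proof (gdist_tri b c e Hb Hc1 (proj1 He)). lra.
        -- right; exists c'; refine (conj Hc' (conj eq_refl _)). pose proof (gdist_tri b c c' Hb Hc1 (proj1 Hc')). lra.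
    + rewrite DSN_n in H1 by lra. discriminate.
    + destruct H3 as [Hc1 Hc2]. destruct (Req_dec (pz c) 0).
      * rewrite DNS_e in H1 by auto. inversion H1; subst.
        left; exists (g c). split. apply (homeo_facts g ginv c Hh). split; auto. lra.
      * rewrite DNS_n in H1 by auto. discriminate.
    + rewrite DNN in H1; inversion H1; subst. destruct H3 as [Hc1 Hc2].
      destruct (IH c y r' ltac:(split; auto) H4 Hy H2) as [(e&He&He2)|(c'&Hc'&->&Hc'2)].
      -- left; exists e; split; auto. pose proof (gdist_tri b c e Hb Hc1 (proj1 He)). lra.
      -- right; exists c'; refine (conj Hc' (conj eq_refl _)). pose proof (gdist_tri b c c' Hb Hc1 (proj1 Hc')). lra.
Qed.

Lemma delta_pos i a : openH i a -> exists delta, 0 < delta /\ forall e, onS1 e -> delta <= gdist a e.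
Proof.
  intros [Ha Hz]. assert (Hz2: 0 < pz a * pz a) by (destruct i; nra).
  assert (Hz3: pz a * pz a <= 1) by (unfold onS2, dot in Ha; pose proof (Rle_0_sqr (px a)); pose proof (Rle_0_sqr (py a)); unfold Rsqr in *; lra).
  set (k := 1 - (pz a * pz a)/2).
  exists (acos k). split.
  - rewrite <- acos_1. apply acos_antitone_strict; unfold k; lra.
  - intros e [He Hez]. unfold gdist. pose proof (dot_bound a e Ha He).
    apply acos_antitone; try lra.
    unfold onS2, dot in *; destruct a as [a1 a2 a3], e as [e1 e2 e3]; simpl in *. subst e3.
    assert (E: (a1*e1+a2*e2)^2 + (a1*e2-a2*e1)^2 = (a1*a1+a2*a2)*(e1*e1+e2*e2)) by ring.
    assert (He2: e1*e1+e2*e2 = 1) by lra. assert (Ha2: a1*a1+a2*a2 = 1 - a3*a3) by lra.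
    rewrite He2, Ha2 in E. pose proof (pow2_ge_0 (a1*e2-a2*e1)).
    assert ((a1*e1+a2*e2+a3*0)^2 <= 1 - a3*a3) by (replace (a1*e1+a2*e2+a3*0) with (a1*e1+a2*e2) by ring; lra).
    assert (k*k >= 1 - a3*a3) by (unfold k; nra).
    assert (0 <= k) by (unfold k; nra).
    nra.
    unfold k; lra.
Qed.

Definition incrG (G : R -> R) := (forall s t, s < t -> G s < G t) /\ (forall t, G (t + 2 * PI) = G t + 2 * PI).

Lemma G_mono G : incrG G -> forall s t, s <= t -> G s <= G t.
Proof. intros [H _] s t [h|h]. left; auto. subst; lra. Qed.

Lemma G_perZ G : incrG G -> forall t k, G (t + 2*PI*IZR k) = G t + 2*PI*IZR k.
Proof.
  intros [_ Hp].
  assert (Hn: forall n t, G (t + 2*PI*INR n) = G t + 2*PI*INR n).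
  { induction n; intros t. simpl. rewrite !Rmult_0_r, !Rplus_0_r; auto.
    rewrite S_INR. replace (t + 2*PI*(INR n + 1)) with ((t + 2*PI*INR n) + 2*PI) by ring.
    rewrite Hp, IHn. ring. }
  intros t k. destruct k as [|p|p].
  - simpl. rewrite !Rmult_0_r, !Rplus_0_r; auto.
  - assert (E: IZR (Zpos p) = INR (Pos.to_nat p)) by (rewrite INR_IZR_INZ, positive_nat_Z; auto).
    rewrite E. apply Hn.
  - assert (E: IZR (Zpos p) = INR (Pos.to_nat p)) by (rewrite INR_IZR_INZ, positive_nat_Z; auto).
    rewrite IZR_NEG, E. set (n := Pos.to_nat p).
    pose proof (Hn n (t + 2*PI*-INR n)).
    replace (t + 2*PI*-INR n + 2*PI*INR n) with t in H by ring. lra.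
Qed.

Definition ell G u w := Rmin (Rabs (u - w)) (Rabs (G u - G w)).
Definition mm (g : pt -> pt) p q := Rmin (gdist p q) (gdist (g p) (g q)).

Lemma Rmin_mono a b c d : a <= c -> b <= d -> Rmin a b <= Rmin c d.
Proof. unfold Rmin; repeat destruct Rle_dec; lra. Qed.

Lemma mm_le_ell g G : (forall t, g (eqpt t) = eqpt (G t)) -> forall u v, mm g (eqpt u) (eqpt v) <= ell G u v.
Proof. intros Hg u v. unfold mm, ell. rewrite !Hg. apply Rmin_mono; apply gdist_eqpt_le. Qed.

Lemma lift g G : incrG G -> (forall t, g (eqpt t) = eqpt (G t)) ->
  forall u p1, onS1 p1 -> exists w1, eqpt w1 = p1 /\ ell G u w1 <= mm g (eqpt u) p1.
Proof.
  intros HG Hg u p1 Hp1. destruct (angle_exists p1 Hp1) as [v [_ <-]].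
  unfold mm. rewrite !Hg, !gdist_eqpt.
  destruct (Rle_or_lt (acos (cos (u - v))) (acos (cos (G u - G v)))).
  - destruct (lift_exact u v) as [k [Hk1 Hk2]]. exists (v + 2*PI*IZR k). split; auto.
    unfold ell. rewrite (Rmin_left (acos (cos (u - v)))) by lra. rewrite <- Hk2. apply Rmin_l.
  - destruct (lift_exact (G u) (G v)) as [k [Hk1 Hk2]]. exists (v + 2*PI*IZR k). split. apply eqpt_perZ.
    unfold ell. rewrite (Rmin_right (acos (cos (u - v)))) by lra. rewrite (G_perZ G HG), <- Hk2. apply Rmin_r.
Qed.

Lemma ell_mono G : incrG G -> forall u w v, Rmin u w <= v <= Rmax u w -> ell G u v <= ell G u w.
Proof.
  intros HG u w v Hv. unfold ell. apply Rmin_mono.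
  - unfold Rmin, Rmax in Hv; destruct Rle_dec in Hv; apply Rabs_le; split;
      unfold Rabs; destruct Rcase_abs; lra.
  - unfold Rmin, Rmax in Hv; destruct Rle_dec in Hv.
    + pose proof (G_mono G HG u v ltac:(lra)); pose proof (G_mono G HG v w ltac:(lra)).
      apply Rabs_le; split; unfold Rabs; destruct Rcase_abs; lra.
    + pose proof (G_mono G HG w v ltac:(lra)); pose proof (G_mono G HG v u ltac:(lra)).
      apply Rabs_le; split; unfold Rabs; destruct Rcase_abs; lra.
Qed.

Definition Phi g q p r := forall u, eqpt u = p -> exists w, eqpt w = q /\
  forall v, Rmin u w <= v <= Rmax u w -> exists r', r' <= r /\ reach g (zS p) (zS (eqpt v)) r'.

Lemma Phi_mono g q p r r' : Phi g q p r -> r <= r' -> Phi g q p r'.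
Proof.
  intros H Hr u Hu. destruct (H u Hu) as [w [Hw H2]]. exists w; split; auto.
  intros v Hv. destruct (H2 v Hv) as [r0 [h1 h2]]. exists r0; split; auto; lra.
Qed.

Lemma onS1_inZ p : onS1 p -> inZ (zS p).
Proof. intros [h1 h2]; simpl; split; auto; lra. Qed.

Lemma Phi_base g ginv q : circle_homeo g ginv -> onS1 q -> Phi g q q 0.
Proof.
  intros Hh Hq u Hu. exists u; split; auto. intros v Hv.
  assert (v = u) by (unfold Rmin, Rmax in Hv; destruct Rle_dec in Hv; lra). subst v.
  exists 0; split; [lra|]. rewrite Hu. apply reach_nil.
  destruct Hq as [Hq1 Hq2]. rewrite DSS_ee by auto.
  destruct (homeo_facts g ginv q Hh (conj Hq1 Hq2)) as [[h _] _].
  rewrite !gdist_self by auto. rewrite Rmin_left; auto; lra.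
Qed.

Lemma Comb g G : incrG G -> (forall t, g (eqpt t) = eqpt (G t)) ->
  forall q p p1 d r2, onS1 p -> onS1 p1 -> mm g p p1 <= d -> Phi g q p1 r2 -> Phi g q p (d + r2).
Proof.
  intros HG Hg q p p1 d r2 Hp Hp1 Hd HP u Hu.
  destruct (lift g G HG Hg u p1 Hp1) as [w1 [Hw1 Hl]]. rewrite Hu in Hl.
  destruct (HP w1 Hw1) as [w [Hw HP2]]. exists w; split; auto.
  assert (Hr2: 0 <= r2).
  { destruct (HP2 w1) as [r0 [h1 h2]]. unfold Rmin, Rmax; destruct Rle_dec; lra.
    apply reach_nonneg in h2; lra. }
  intros v Hv.
  destruct (classic (Rmin u w1 <= v <= Rmax u w1)) as [HA|HB].
  - exists (mm g p (eqpt v)). split.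
    + pose proof (ell_mono G HG u w1 v HA). pose proof (mm_le_ell g G Hg u v). rewrite Hu in H0. lra.
    + apply reach_nil. destruct Hp as [_ hp]. rewrite DSS_ee; auto.
  - destruct (HP2 v) as [r0 [h1 h2]].
    { revert HB Hv. unfold Rmin, Rmax; repeat destruct Rle_dec; intros; lra. }
    exists (mm g p p1 + r0). split. lra.
    apply reach_cons with (zS p1); auto. destruct Hp as [_ hp], Hp1 as [_ hp1]. rewrite DSS_ee; auto.
    apply onS1_inZ; auto.
Qed.

Lemma eq_main g ginv G : circle_homeo g ginv -> incrG G -> (forall t, g (eqpt t) = eqpt (G t)) ->
  forall q, onS1 q -> forall l x r, List.Forall inZ l -> inZ x -> chain_cost g x l (zS q) = Finite r ->
  (forall p, x = zS p -> pz p = 0 -> Phi g q p r) /\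
  (forall b, x = zS b -> pz b <> 0 -> exists p1 c, onS1 p1 /\ gdist b p1 <= c /\ Phi g q p1 (r - c)) /\
  (forall b, x = zN b -> exists p1 c, onS1 p1 /\ gdist b (g p1) <= c /\ Phi g q p1 (r - c)).
Proof.
  intros Hh HG Hg q Hq. pose proof Hq as [Hq1 Hq2].
  pose proof (Phi_base g ginv q Hh Hq) as HB.
  assert (HB': forall r, Phi g q q (r - r)) by (intro r; rewrite Rminus_diag; auto).
  induction l as [|z l IH]; intros x r Hl Hx Hc.
  - cbn [chain_cost] in Hc. split; [|split].
    + intros p -> hp. rewrite DSS_ee in Hc by auto. inversion Hc; subst.
      rewrite <- (Rplus_0_r (Rmin _ _)). apply (Comb g G HG Hg q p q); auto.
      split; auto. apply Hx. fold (mm g p q); lra.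
    + intros b -> hb. rewrite DSS_n in Hc by auto. inversion Hc; subst.
      exists q, (gdist b q). repeat split; auto; lra.
    + intros b ->. rewrite DNS_e in Hc by auto. inversion Hc; subst.
      exists q, (gdist b (g q)). repeat split; auto; lra.
  - apply chain_cons in Hc. destruct Hc as (d&r'&H1&H2&->). inversion Hl; subst.
    destruct (IH z r' H4 H3 H2) as (I1&I2&I3).
    assert (Hr': 0 <= r') by (apply (reach_nonneg g z (zS q)); exists l; auto).
    split; [|split].
    + intros p -> hp. assert (Hp: onS1 p) by (split; auto; apply Hx).
      assert (Hgp: onS1 (g p)) by apply (homeo_facts g ginv p Hh Hp).
      destruct z as [c|c].
      * destruct (Req_dec (pz c) 0) as [hc|hc].
        -- rewrite DSS_ee in H1 by auto. inversion H1; subst.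
           apply (Comb g G HG Hg q p c); auto. split; auto; apply H3. fold (mm g p c); lra.
        -- rewrite DSS_en in H1 by auto. inversion H1; subst.
           destruct (I2 c eq_refl hc) as (p1&c0&Hp1&Hc0&HP).
           apply Phi_mono with (gdist p c + c0 + (r' - c0)); [|lra].
           apply (Comb g G HG Hg q p p1); auto.
           unfold mm. pose proof (Rmin_l (gdist p p1) (gdist (g p) (g p1))).
           pose proof (gdist_tri p c p1 (proj1 Hp) (proj1 H3) (proj1 Hp1)). lra.
      * rewrite DSN_e in H1 by auto. inversion H1; subst.
        destruct (I3 c eq_refl) as (p1&c0&Hp1&Hc0&HP).
        apply Phi_mono with (gdist (g p) c + c0 + (r' - c0)); [|lra].
        apply (Comb g G HG Hg q p p1); auto.
        assert (Hgp1: onS1 (g p1)) by apply (homeo_facts g ginv p1 Hh Hp1).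
        unfold mm. pose proof (Rmin_r (gdist p p1) (gdist (g p) (g p1))).
        pose proof (gdist_tri (g p) c (g p1) (proj1 Hgp) (proj1 H3) (proj1 Hgp1)). lra.
    + intros b -> hb. destruct Hx as [Hb _].
      destruct z as [c|c].
      * rewrite DSS_n in H1 by auto. inversion H1; subst.
        destruct (Req_dec (pz c) 0) as [hc|hc].
        -- exists c, (gdist b c). split; [split; auto; apply H3|]. split; [lra|].
           apply Phi_mono with r'; auto; lra.
        -- destruct (I2 c eq_refl hc) as (p1&c0&Hp1&Hc0&HP).
           exists p1, (gdist b c + c0). split; auto. split.
           pose proof (gdist_tri b c p1 Hb (proj1 H3) (proj1 Hp1)). lra.
           apply Phi_mono with (r' - c0); auto; lra.
      * rewrite DSN_n in H1 by auto. discriminate.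
    + intros b ->. destruct Hx as [Hb _].
      destruct z as [c|c].
      * destruct (Req_dec (pz c) 0) as [hc|hc].
        -- rewrite DNS_e in H1 by auto. inversion H1; subst.
           exists c, (gdist b (g c)). split; [split; auto; apply H3|]. split; [lra|].
           apply Phi_mono with r'; auto; lra.
        -- rewrite DNS_n in H1 by auto. discriminate.
      * rewrite DNN in H1. inversion H1; subst.
        destruct (I3 c eq_refl) as (p1&c0&Hp1&Hc0&HP).
        assert (Hgp1: onS1 (g p1)) by apply (homeo_facts g ginv p1 Hh Hp1).
        exists p1, (gdist b c + c0). split; auto. split.
        pose proof (gdist_tri b c (g p1) Hb (proj1 H3) (proj1 Hgp1)). lra.
        apply Phi_mono with (r' - c0); auto; lra.
Qed.

Definition small g x y := forall eta, 0 < eta -> exists r, reach g x y r /\ r < eta.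

Lemma arc_lemma g ginv G : circle_homeo g ginv -> incrG G -> (forall t, g (eqpt t) = eqpt (G t)) ->
  forall s t, s <= t <= s + 2*PI -> small g (zS (eqpt s)) (zS (eqpt t)) ->
  (forall u, s <= u <= t -> small g (zS (eqpt s)) (zS (eqpt u))) \/
  (forall u, t <= u <= s + 2*PI -> small g (zS (eqpt s)) (zS (eqpt u))).
Proof.
  intros Hh HG Hg s t Hst Hsm. apply NNPP; intro Hn. apply not_or_and in Hn. destruct Hn as [Hn1 Hn2].
  apply not_all_ex_not in Hn1. destruct Hn1 as [u1 Hn1].
  apply not_all_ex_not in Hn2. destruct Hn2 as [u2 Hn2].
  apply imply_to_and in Hn1. apply imply_to_and in Hn2.
  destruct Hn1 as [Hu1 Hn1]. destruct Hn2 as [Hu2 Hn2].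
  unfold small in Hn1, Hn2. apply not_all_ex_not in Hn1. destruct Hn1 as [e1 Hn1].
  apply not_all_ex_not in Hn2. destruct Hn2 as [e2 Hn2].
  apply imply_to_and in Hn1. apply imply_to_and in Hn2.
  destruct Hn1 as [He1 Hn1]. destruct Hn2 as [He2 Hn2].
  destruct (Hsm (Rmin e1 e2)) as [r [[l [Hl Hc]] Hr]]. apply Rmin_glb_lt; auto.
  pose proof (eqpt_onS1 s) as Hs1. pose proof (eqpt_onS1 t) as Ht1.
  destruct (eq_main g ginv G Hh HG Hg (eqpt t) Ht1 l _ r Hl (onS1_inZ _ Hs1) Hc) as [M _].
  destruct (M (eqpt s) eq_refl eq_refl s eq_refl) as [w [Hw HP]].
  destruct (eqpt_mod _ _ Hw) as [k ->].
  pose proof (Rmin_l e1 e2); pose proof (Rmin_r e1 e2). pose proof PI_RGT_0.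
  destruct (Z_le_gt_dec 0 k) as [hk|hk].
  - apply IZR_le in hk. apply Hn1. destruct (HP u1) as [r' [h1 h2]].
    { unfold Rmin, Rmax; destruct Rle_dec; nra. }
    exists r'; split; auto; lra.
  - assert (hk': (k <= -1)%Z) by lia. apply IZR_le in hk'.
    apply Hn2. destruct (HP (u2 + 2*PI*IZR (-1))) as [r' [h1 h2]].
    { unfold Rmin, Rmax; destruct Rle_dec; nra. }
    rewrite eqpt_perZ in h2. exists r'; split; auto; lra.
Qed.

Lemma IVT_sep (F U V : pt -> Prop) a b : a <= b -> (forall u, a <= u <= b -> F (eqpt u)) ->
  sopen U -> sopen V -> (forall p, F p -> U p \/ V p) -> (forall p, F p -> U p -> V p -> False) ->
  U (eqpt a) -> V (eqpt b) -> False.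
Proof.
  intros Hab HF HU HV Hcov Hdis Ua Vb.
  set (E := fun u => a <= u <= b /\ forall v, a <= v <= u -> U (eqpt v)).
  assert (Eb: bound E) by (exists b; intros u [h _]; lra).
  assert (Ea: exists x, E x) by (exists a; split; [lra|]; intros v hv; replace v with a by lra; auto).
  destruct (completeness E Eb Ea) as [c [Hc1 Hc2]].
  assert (Hac: a <= c) by (apply Hc1; destruct Ea as [x _]; split; [lra|]; intros v hv; replace v with a by lra; auto).
  assert (Hcb: c <= b) by (apply Hc2; intros u [h _]; lra).
  assert (Cl1: forall v, a <= v < c -> U (eqpt v)).
  { intros v hv. destruct (classic (exists u, E u /\ v < u)) as [[u [[_ Hu] hu]]|Hn].
    - apply Hu; lra.
    - exfalso. assert (c <= v); [|lra]. apply Hc2. intros u Eu. apply Rnot_lt_le. intro h. apply Hn; eauto. }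
  assert (Fc: F (eqpt c)) by (apply HF; lra).
  destruct (Hcov _ Fc) as [Uc|Vc].
  - destruct (HU (eqpt c) (eqpt_onS2 c) Uc) as [eps [Heps Heps2]].
    destruct (Rle_or_lt b c).
    + assert (c = b) by lra. subst c. apply (Hdis (eqpt b)); auto.
    + set (u' := Rmin b (c + eps/2)).
      assert (E u').
      { split. unfold u'; unfold Rmin; destruct Rle_dec; lra.
        intros v hv. destruct (Rlt_or_le v c). apply Cl1; lra.
        apply Heps2. apply eqpt_onS2. pose proof (gdist_eqpt_le c v).
        assert (v <= c + eps/2) by (unfold u', Rmin in hv; destruct Rle_dec in hv; lra).
        rewrite Rabs_left1 in H1 by lra. lra. }
      apply Hc1 in H0. unfold u', Rmin in H0; destruct Rle_dec in H0; lra.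
  - destruct (Rle_or_lt c a).
    + assert (c = a) by lra. subst c. apply (Hdis (eqpt a)); auto.
    + destruct (HV (eqpt c) (eqpt_onS2 c) Vc) as [eps [Heps Heps2]].
      set (u' := Rmax a (c - eps/2)).
      assert (Hu': a <= u' < c) by (unfold u', Rmax; destruct Rle_dec; lra).
      apply (Hdis (eqpt u')). apply HF; lra. apply Cl1; auto.
      apply Heps2. apply eqpt_onS2. pose proof (gdist_eqpt_le c u').
      assert (c - eps/2 <= u') by (unfold u', Rmax; destruct Rle_dec; lra).
      rewrite Rabs_right in H0 by lra. lra.
Qed.

Lemma connect_lemma (F : pt -> Prop) :
  (forall p q, F p -> F q -> exists a b, a <= b /\
     ((eqpt a = p /\ eqpt b = q) \/ (eqpt a = q /\ eqpt b = p)) /\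
     forall u, a <= u <= b -> F (eqpt u)) -> sconnected F.
Proof.
  intros HA. unfold sconnected. intros [U [V [HU [HV [Hcov [Hdis [[p [Fp Up]] [q [Fq Vq]]]]]]]]].
  destruct (HA p q Fp Fq) as [a [b [Hab [[[E1 E2]|[E1 E2]] HF]]]]; subst.
  - eapply (IVT_sep F U V a b); eauto.
  - apply (IVT_sep F V U a b); auto.
    intros p Fp0; destruct (Hcov p Fp0); auto.
    intros p Fp0 h1 h2; eapply Hdis; eauto.
Qed.

Lemma single_lemma (F : pt -> Prop) a : onS2 a -> F a -> (forall b, F b -> b = a) ->
  scompact F /\ sconnected F.
Proof.
  intros Ha Fa Hs. split.
  - split. intros p Fp; rewrite (Hs p Fp); auto.
    intros I U HU Hcov. destruct (Hcov a Fa) as [j Hj]. exists (j :: nil).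
    intros p Fp. rewrite (Hs p Fp). exists j; split; [now left | auto].
  - unfold sconnected. intros [U [V [HU [HV [Hcov [Hdis [[p [Fp Up]] [q [Fq Vq]]]]]]]]].
    rewrite (Hs p Fp) in Up. rewrite (Hs q Fq) in Vq. exact (Hdis a Fa Up Vq).
Qed.

Lemma compact_lemma (F : pt -> Prop) : (forall p, F p -> onS1 p) ->
  (forall t, ~ F (eqpt t) -> exists eta, 0 < eta /\ forall s, Rabs (s - t) < eta -> ~ F (eqpt s)) ->
  scompact F.
Proof.
  intros HS1 Hcl. split. intros p Fp; apply HS1; auto.
  intros I U HU Hcov.
  destruct (classic (exists p, F p)) as [[p0 Fp0]|Hemp].
  2:{ exists nil. intros p Fp; exfalso; eauto. }
  destruct (Hcov p0 Fp0) as [j0 _].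
  set (T := fun t => -PI <= t <= PI /\ F (eqpt t)).
  assert (Hj: exists jf : R -> I, forall t, T t -> U (jf t) (eqpt t)).
  { assert (H: forall t, exists j, T t -> U j (eqpt t)).
    { intros t. destruct (classic (T t)) as [h|h].
      - destruct (Hcov _ (proj2 h)) as [j Hj]; eauto.
      - exists j0; tauto. }
    exists (fun t => proj1_sig (constructive_indefinite_description _ (H t))).
    intros t. exact (proj2_sig (constructive_indefinite_description _ (H t))). }
  destruct Hj as [jf Hjf].
  assert (Tc: compact T).
  { apply compact_P4 with (fun t => -PI <= t <= PI). apply compact_P3.
    2:{ intros t [h _]; auto. }
    intros x Hx. unfold complementary in Hx.
    destruct (Rlt_or_le x (-PI)) as [h1|h1].
    { exists (mkposreal (-PI - x) ltac:(lra)). intros y Hy. unfold disc in Hy; simpl in Hy.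
      unfold complementary, T. intros [[h3 _] _]. apply Rabs_def2 in Hy. lra. }
    destruct (Rlt_or_le PI x) as [h2|h2].
    { exists (mkposreal (x - PI) ltac:(lra)). intros y Hy. unfold disc in Hy; simpl in Hy.
      unfold complementary, T. intros [[_ h3] _]. apply Rabs_def2 in Hy. lra. }
    assert (~ F (eqpt x)) by (intro h; apply Hx; split; auto).
    destruct (Hcl x H) as [eta [Heta Heta2]].
    exists (mkposreal eta Heta). intros y Hy. unfold disc in Hy; simpl in Hy.
    unfold complementary, T. intros [_ h]. apply (Heta2 y Hy h). }
  assert (cf: forall x, (exists y, (fun x y => T x /\ U (jf x) (eqpt y)) x y) -> T x).
  { intros x [y [h _]]; auto. }
  set (fam := mkfamily T (fun x y => T x /\ U (jf x) (eqpt y)) cf).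
  assert (Hco: covering_open_set T fam).
  { split.
    - intros x Tx. exists x. simpl. split; auto.
    - intros x y [Tx Uy]. destruct (HU (jf x) (eqpt y) (eqpt_onS2 y) Uy) as [eps [Heps Heps2]].
      exists (mkposreal eps Heps). intros z Hz. unfold disc in Hz; simpl in Hz. split; auto.
      apply Heps2. apply eqpt_onS2. pose proof (gdist_eqpt_le y z).
      rewrite Rabs_minus_sym in H. lra. }
  destruct (Tc fam Hco) as [D [Hcv [l Hl]]].
  exists (map jf l). intros p Fp. destruct (angle_exists p (HS1 p Fp)) as [t [Ht <-]].
  destruct (Hcv t) as [y [[Ty Uy] Dy]]. split; auto.
  exists (jf y). split; auto. apply in_map. apply Hl. split; auto.
Qed.

Lemma small_sym g x y : small g x y -> small g y x.
Proof. intros H eta he. destruct (H eta he) as [r [h1 h2]]. exists r; split; auto. now apply reach_sym. Qed.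

Lemma small_trans g x y z : small g x y -> inZ y -> small g y z -> small g x z.
Proof.
  intros H1 Hy H2 eta he. destruct (H1 (eta/2)) as [r1 [h1 h2]]. lra.
  destruct (H2 (eta/2)) as [r2 [h3 h4]]. lra.
  exists (r1 + r2). split. eapply reach_app; eauto. lra.
Qed.

Lemma iota_eq_iz ginv i b c : iotaZ ginv i b = iz i c -> openH i c -> closedH i b -> b = c.
Proof.
  destruct i; simpl. congruence.
  destruct Req_EM_T; congruence.
Qed.

Lemma iota_north ginv p : onS1 p -> iotaZ ginv north p = zS (ginv p).
Proof. intros [_ h]; simpl; destruct Req_EM_T; congruence. Qed.

Lemma Gsurj g ginv G : circle_homeo g ginv -> incrG G -> (forall t, g (eqpt t) = eqpt (G t)) ->
  forall v, exists w, G w = v.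
Proof.
  intros Hh HG Hg v. destruct (homeo_facts g ginv (eqpt v) Hh (eqpt_onS1 v)) as (_&h1&_&h2).
  destruct (angle_exists _ h1) as [w0 [_ Hw0]].
  assert (eqpt (G w0) = eqpt v) by (rewrite <- Hg, Hw0; auto).
  destruct (eqpt_mod _ _ H) as [k Hk].
  exists (w0 + 2*PI*IZR (-k)). rewrite (G_perZ G HG), Hk, opp_IZR. ring.
Qed.

Lemma normalize s t0 : exists t, s <= t <= s + 2*PI /\ eqpt t = eqpt t0.
Proof.
  destruct (reduce (t0 - s - PI)) as [k Hk]. exists (t0 + 2*PI*IZR (-k)).
  rewrite opp_IZR. split. lra. rewrite <- opp_IZR. apply eqpt_perZ.
Qed.

Lemma eqpt_2PI s : eqpt (s + 2*PI) = eqpt s.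
Proof. replace (s + 2*PI) with (s + 2*PI*IZR 1) by (simpl; ring). apply eqpt_perZ. Qed.

Lemma zero_iff g ginv i x a : tilde_preimage g ginv i x a <-> closedH i a /\ small g (iotaZ ginv i a) x.
Proof. unfold tilde_preimage, small. now rewrite dZ_zero_iff. Qed.

Lemma part1 g ginv i : circle_homeo g ginv -> forall a b, closedH i a -> closedH i b ->
     Rbar_le (dZ g (iotaZ ginv i a) (iotaZ ginv i b)) (Finite (gdist a b)).
Proof.
  intros Hh a b Ha Hb. destruct (Dfun_iota_le g ginv i a b Hh Ha Hb) as [d [H1 H2]].
  apply (Rbar_le_trans _ (Finite d)). apply dZ_le. now apply reach_nil. simpl; auto.
Qed.

Lemma iz_inZ i c : openH i c -> inZ (iz i c).
Proof. destruct i; simpl; intros [h1 h2]; split; auto; lra. Qed.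

Lemma part2 g ginv i : circle_homeo g ginv -> forall a, openH i a -> exists eps, 0 < eps /\
     forall b c, openH i b -> openH i c -> gdist a b < eps -> gdist a c < eps ->
       dZ g (iotaZ ginv i b) (iotaZ ginv i c) = Finite (gdist b c).
Proof.
  intros Hh a Ha. destruct (delta_pos i a Ha) as [d [Hd Hd2]].
  exists (d/3). split. lra. intros b c Hb Hc Hab Hac.
  rewrite !iota_open by auto.
  apply Rbar_le_antisym.
  - apply dZ_le. apply reach_nil. destruct i; cbn [iz].
    + apply DSS_n. destruct Hb; lra.
    + reflexivity.
  - apply dZ_ge. intros r [l [Hl Hcc]].
    destruct (exit_lemma g ginv i Hh l b (iz i c) r Hb Hl (iz_inZ i c Hc) Hcc) as [(e&He&He2)|(c'&Hc'&Heq&Hc2)].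
    + pose proof (Hd2 e He). pose proof (gdist_tri a b e (proj1 Ha) (proj1 Hb) (proj1 He)).
      pose proof (gdist_tri b a c (proj1 Hb) (proj1 Ha) (proj1 Hc)). rewrite (gdist_sym b a) in H1. lra.
    + assert (c = c') by (destruct i; simpl in Heq; congruence). subst; auto.
Qed.

Lemma interior_unique g ginv i x a : circle_homeo g ginv -> inZ x -> openH i a ->
  tilde_preimage g ginv i x a -> forall b, tilde_preimage g ginv i x b -> b = a.
Proof.
  intros Hh Hx Ha Fa b Fb. apply zero_iff in Fa; apply zero_iff in Fb.
  destruct Fa as [_ Sa]; destruct Fb as [Cb Sb].
  apply NNPP; intro Hne.
  destruct (delta_pos i a Ha) as [d [Hd Hd2]].
  assert (Hg: 0 < gdist a b).
  { destruct (gdist_nonneg a b); auto. exfalso; apply Hne. symmetry; apply gdist_eq0; auto.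
    apply Ha. apply Cb. }
  assert (S: small g (iotaZ ginv i a) (iotaZ ginv i b)).
  { apply small_trans with x; auto. apply small_sym; auto. }
  destruct (S (Rmin d (gdist a b))) as [r [[l [Hl Hc]] Hr]]. apply Rmin_glb_lt; auto.
  rewrite iota_open in Hc by auto.
  pose proof (Rmin_l d (gdist a b)). pose proof (Rmin_r d (gdist a b)).
  destruct (exit_lemma g ginv i Hh l a _ r Ha Hl (iota_inZ g ginv i b Hh Cb) Hc) as [(e&He&He2)|(c'&Hc'&Heq&Hc2)].
  - pose proof (Hd2 e He). lra.
  - apply iota_eq_iz in Heq; auto. subst. lra.
Qed.

Lemma closed_fib g ginv i x : circle_homeo g ginv ->
  forall t, ~ tilde_preimage g ginv i x (eqpt t) -> exists eta, 0 < eta /\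
     forall s, Rabs (s - t) < eta -> ~ tilde_preimage g ginv i x (eqpt s).
Proof.
  intros Hh t Ht.
  assert (Ce: forall s, closedH i (eqpt s)).
  { intros s. destruct (eqpt_onS1 s) as [h1 h2]. destruct i; split; auto; lra. }
  rewrite zero_iff in Ht. pose proof (Ce t). assert (Hn: ~ small g (iotaZ ginv i (eqpt t)) x) by tauto.
  unfold small in Hn. apply not_all_ex_not in Hn. destruct Hn as [eta Hn].
  apply imply_to_and in Hn. destruct Hn as [He Hn].
  exists (eta/2). split. lra. intros s Hs Fs. apply zero_iff in Fs. destruct Fs as [_ Ss].
  destruct (Ss (eta/2)) as [r [Hr1 Hr2]]. lra.
  destruct (Dfun_iota_le g ginv i (eqpt t) (eqpt s) Hh (Ce t) (Ce s)) as [d [Hd1 Hd2]].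
  pose proof (gdist_eqpt_le t s) as Hgl. rewrite Rabs_minus_sym in Hgl.
  apply Hn. exists (d + r). split. apply reach_cons with (iotaZ ginv i (eqpt s)); auto.
  apply (iota_inZ g); auto. lra.
Qed.

Lemma closedH_eqpt i s : closedH i (eqpt s).
Proof. destruct (eqpt_onS1 s) as [h1 h2]. destruct i; split; auto; lra. Qed.

Lemma arcs_south g ginv G x : circle_homeo g ginv -> incrG G -> (forall t, g (eqpt t) = eqpt (G t)) ->
  inZ x -> (forall a, tilde_preimage g ginv south x a -> onS1 a) ->
  forall p q, tilde_preimage g ginv south x p -> tilde_preimage g ginv south x q ->
  exists a b, a <= b /\ ((eqpt a = p /\ eqpt b = q) \/ (eqpt a = q /\ eqpt b = p)) /\
     forall u, a <= u <= b -> tilde_preimage g ginv south x (eqpt u).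
Proof.
  intros Hh HG Hg Hx HS1 p q Fp Fq.
  destruct (angle_exists p (HS1 p Fp)) as [s [_ Hs]].
  destruct (angle_exists q (HS1 q Fq)) as [t0 [_ Ht0]].
  destruct (normalize s t0) as [t [Hst Ht]]. rewrite Ht0 in Ht.
  apply zero_iff in Fp; apply zero_iff in Fq. destruct Fp as [_ Sp]; destruct Fq as [_ Sq].
  simpl in Sp, Sq.
  assert (Sst: small g (zS (eqpt s)) (zS (eqpt t))).
  { rewrite Hs, Ht. apply small_trans with x; auto. apply small_sym; auto. }
  assert (Hin: forall u, small g (zS (eqpt s)) (zS (eqpt u)) -> tilde_preimage g ginv south x (eqpt u)).
  { intros u Hu. apply zero_iff. split. apply closedH_eqpt. simpl.
    apply small_trans with (zS (eqpt s)). apply small_sym; auto. apply onS1_inZ, eqpt_onS1.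
    rewrite Hs; auto. }
  destruct (arc_lemma g ginv G Hh HG Hg s t Hst Sst) as [A|A].
  - exists s, t. split. lra. split. left; auto. intros u hu. apply Hin, A; auto.
  - exists t, (s + 2*PI). split. lra. split. right; split; auto. rewrite eqpt_2PI; auto.
    intros u hu. apply Hin, A; auto.
Qed.

Lemma arcs_north g ginv G x : circle_homeo g ginv -> incrG G -> (forall t, g (eqpt t) = eqpt (G t)) ->
  inZ x -> (forall a, tilde_preimage g ginv north x a -> onS1 a) ->
  forall p q, tilde_preimage g ginv north x p -> tilde_preimage g ginv north x q ->
  exists a b, a <= b /\ ((eqpt a = p /\ eqpt b = q) \/ (eqpt a = q /\ eqpt b = p)) /\
     forall u, a <= u <= b -> tilde_preimage g ginv north x (eqpt u).
Proof.
  intros Hh HG Hg Hx HS1 p q Fp Fq.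
  pose proof (HS1 p Fp) as Hp1. pose proof (HS1 q Fq) as Hq1.
  destruct (homeo_facts g ginv p Hh Hp1) as (_&Hgp&_&Hgp2).
  destruct (homeo_facts g ginv q Hh Hq1) as (_&Hgq&_&Hgq2).
  destruct (angle_exists _ Hgp) as [s [_ Hs]].
  destruct (angle_exists _ Hgq) as [t0 [_ Ht0]].
  destruct (normalize s t0) as [t [Hst Ht]]. rewrite Ht0 in Ht.
  apply zero_iff in Fp; apply zero_iff in Fq. destruct Fp as [_ Sp]; destruct Fq as [_ Sq].
  rewrite iota_north in Sp, Sq by auto.
  assert (Sst: small g (zS (eqpt s)) (zS (eqpt t))).
  { rewrite Hs, Ht. apply small_trans with x; auto. apply small_sym; auto. }
  assert (Hin: forall a b, a <= b -> (forall w, a <= w <= b -> small g (zS (eqpt s)) (zS (eqpt w))) ->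
     forall u, G a <= u <= G b -> tilde_preimage g ginv north x (eqpt u)).
  { intros a b Hab Hw u Hu. destruct (Gsurj g ginv G Hh HG Hg u) as [w <-].
    assert (Hwab: a <= w <= b).
    { destruct HG as [HGi _]. split; apply Rnot_lt_le; intro h; apply HGi in h; lra. }
    rewrite <- Hg. destruct (homeo_facts g ginv (eqpt w) Hh (eqpt_onS1 w)) as (Hgw&_&Hgw2&_).
    apply zero_iff. split. destruct Hgw as [h1 h2]; split; auto; lra.
    rewrite iota_north, Hgw2 by auto.
    apply small_trans with (zS (eqpt s)). apply small_sym; auto. apply onS1_inZ, eqpt_onS1.
    rewrite Hs; auto. }
  assert (Ep: eqpt (G s) = p) by (rewrite <- Hg, Hs; auto).
  assert (Eq: eqpt (G t) = q) by (rewrite <- Hg, Ht; auto).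
  destruct (arc_lemma g ginv G Hh HG Hg s t Hst Sst) as [A|A].
  - exists (G s), (G t). split. apply (G_mono G HG); lra. split. left; auto.
    apply Hin. lra. intros; apply A; auto.
  - exists (G t), (G (s + 2*PI)). split. apply (G_mono G HG); lra. split. right; split; auto.
    destruct HG as [_ HGp]. rewrite HGp, eqpt_2PI; auto.
    apply Hin. lra. intros; apply A; auto.
Qed.

Theorem lemma3p3 (g ginv : pt -> pt)
  (Hhomeo : circle_homeo g ginv) (Hor : orientation_preserving g) (i : hemi) :
  (* 1-Lipschitz *)
  (forall a b, closedH i a -> closedH i b ->
     Rbar_le (dZ g (iotaZ ginv i a) (iotaZ ginv i b)) (Finite (gdist a b))) /\
  (* local isometry on the open hemisphere Z_i *)
  (forall a, openH i a -> exists eps, 0 < eps /\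
     forall b c, openH i b -> openH i c -> gdist a b < eps -> gdist a c < eps ->
       dZ g (iotaZ ginv i b) (iotaZ ginv i c) = Finite (gdist b c)) /\
  (* fibres over every point Q x of Z~ *)
  (forall x, inZ x ->
     scompact (tilde_preimage g ginv i x) /\
     sconnected (tilde_preimage g ginv i x) /\
     ((exists a b, tilde_preimage g ginv i x a /\ tilde_preimage g ginv i x b /\ a <> b) ->
      forall a, tilde_preimage g ginv i x a -> onS1 a)).
Proof.
  destruct Hor as [G [HGi [HGp Hg]]]. assert (HG: incrG G) by (split; auto).
  split; [apply part1; auto|]. split; [apply part2; auto|].
  intros x Hx.
  destruct (classic (exists a, tilde_preimage g ginv i x a /\ ~ onS1 a)) as [[a [Fa Na]]|Hn].
  - assert (Ha: openH i a).
    { apply zero_iff in Fa. destruct Fa as [[h1 h2] _]. split; auto.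
      destruct i; destruct (Req_dec (pz a) 0); try lra; exfalso; apply Na; split; auto. }
    pose proof (interior_unique g ginv i x a Hhomeo Hx Ha Fa) as U.
    destruct (single_lemma _ a (proj1 Ha) Fa U) as [C1 C2]. split; auto. split; auto.
    intros [a1 [b1 [h1 [h2 h3]]]]. exfalso. apply h3. rewrite (U a1 h1), (U b1 h2). auto.
  - assert (HS1: forall a, tilde_preimage g ginv i x a -> onS1 a).
    { intros a Fa. apply NNPP; intro h. apply Hn; eauto. }
    split; [|split; [|auto]].
    + apply compact_lemma; auto. apply closed_fib; auto.
    + apply connect_lemma. destruct i.
      * apply (arcs_south g ginv G); auto.
      * apply (arcs_north g ginv G); auto.
Qed.
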